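(* Let $X$ be a $T_1$ space and $\mathcal C$ a pre-pseudogroup on $X$. Equip the morphism set $\mathrm{Mor}(\mathcal C^\star)=\coprod_{x,y\in X}\mathcal C_x^y\cong\coprod_{x\in X}\mathcal C_x(X)=E_{\mathcal C}$ with the topology of the étale space of the presheaf $\mathcal C(-,X)$ (generated by the sets $[f,U]=\{f_x: x\in U\}$ for open $U$ and $f\in\mathcal C(U,X)$), and equip the object set with the topology of $X$. Then $\mathcal C^\star$ is a topological étale groupoid over $X$: the source map $s(f_x)=x$ and the target map $t$ (with $t(\varphi)=y$ for $\varphi\in\mathcal C_x^y$) are local homeomorphisms, and the identity map $X\to E_{\mathcal C}$, the inversion $E_{\mathcal C}\to E_{\mathcal C}$ and the composition $E_{\mathcal C}\times_X E_{\mathcal C}\to E_{\mathcal C}$ are continuous.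
   Context: $X_{top}$ denotes the set of open subsets of $X$, regarded as a category with exactly one morphism $U\to V$ iff $U\subseteq V$. Let $\mathcal C$ be a small category with $\mathrm{Ob}(\mathcal C)=X_{top}$ containing $X_{top}$ as a subcategory (identity on objects). For each open $V$, $\mathcal C(-,V)$ is a presheaf of sets on $X$ (restriction along $U'\subseteq U$ = precomposition with the inclusion morphism). For $x\in X$ let $\mathcal C_x(V)=\operatorname{colim}_{U\ni x}\mathcal C(U,V)$ (germ of $f\in\mathcal C(U,V)$ at $x$ written $f_x$); postcomposition with inclusions makes this functorial in $V$, and for $y\in X$ let $\mathcal C_x^y=\lim_{V\ni y}\mathcal C_x(V)$ (limit over open neighbourhoods of $y$), with projections $\mathcal C_x^y\to\mathcal C_x(V)$. Composition in $\mathcal C$ induces $\mathcal C_y^z\times\mathcal C_x^y\to\mathcal C_x^z$: given $\varphi\in\mathcal C_x^y,\psi\in\mathcal C_y^z$ and open $W\ni z$, choose $g\in\mathcal C(V,W)$, $y\in V$, representing the component $\psi_W$, and $f\in\mathcal C(U,V)$ representing $\varphi_V$; the $W$-component of $\psi\circ\varphi$ is $(g\circ f)_x$. This defines a category $\mathcal C^\star$ with objects the points of $X$ and $\mathcal C^\star(x,y)=\mathcal C_x^y$. For $X$ a $T_1$ space, a pre-pseudogroup on $X$ is such a $\mathcal C$ satisfying: (1) $\mathrm{Ob}(\mathcal C)=\mathrm{Ob}(X_{top})$; (2) for every open $V$ and $x\in X$, the map $\coprod_{y\in V}\mathcal C_x^y\to\mathcal C_x(V)$ induced by the projections is a bijection;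 (3) $\mathcal C^\star$ is a groupoid. A topological groupoid over $X$ has object space $X$ and a topological morphism space with continuous structure maps; it is étale if source and target are local homeomorphisms. *)

(* Defs.v *)
From Stdlib Require Import Classical.

Set Implicit Arguments.
Unset Strict Implicit.

Definition topology (T : Type) := (T -> Prop) -> Prop.

Record is_topology (T : Type) (O : topology T) : Prop := {
  top_full  : O (fun _ => True);
  top_inter : forall A B, O A -> O B -> O (fun t => A t /\ B t);
  top_union : forall F : (T -> Prop) -> Prop,
      (forall A, F A -> O A) -> O (fun t => exists A, F A /\ A t)
}.

Record TopSpace (X : Type) := {
  xopen : topology X;
  xtop  : is_topology xopen
}.

Definition T1 (X : Type) (T : TopSpace X) : Prop :=
  forall x y : X, x <> y -> exists U, xopen T U /\ U x /\ ~ U y.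

(* Topology generated by a family B of subsets (smallest topology containing B);
   open sets are taken up to extensional equality of predicates. *)
Inductive gen_open (T : Type) (B : topology T) : topology T :=
  | go_basic : forall A, B A -> gen_open B A
  | go_full  : gen_open B (fun _ => True)
  | go_inter : forall A A', gen_open B A -> gen_open B A' ->
                 gen_open B (fun t => A t /\ A' t)
  | go_union : forall F : (T -> Prop) -> Prop,
                 (forall A, F A -> gen_open B A) ->
                 gen_open B (fun t => exists A, F A /\ A t).

Definition gen_top (T : Type) (B : topology T) : topology T :=
  fun A => exists A', gen_open B A' /\ forall t, A t <-> A' t.

Definition sub_top (T : Type) (O : topology T) (P : T -> Prop)
  : topology {t : T | P t} :=
  fun A => exists U, O U /\ forall s, A s <-> U (proj1_sig s).

Definition prod_top (A B : Type) (OA : topology A) (OB : topology B)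
  : topology (A * B) :=
  gen_top (fun S => exists U V, OA U /\ OB V /\
                      forall p, S p <-> (U (fst p) /\ V (snd p))).

Definition continuous (A B : Type) (OA : topology A) (OB : topology B)
  (f : A -> B) : Prop :=
  forall V, OB V -> OA (fun a => V (f a)).

Definition homeomorphism (A B : Type) (OA : topology A) (OB : topology B)
  (f : A -> B) : Prop :=
  continuous OA OB f /\
  exists g : B -> A, (forall a, g (f a) = a) /\ (forall b, f (g b) = b) /\
                     continuous OB OA g.

Definition image (A B : Type) (f : A -> B) (W : A -> Prop) : B -> Prop :=
  fun b => exists a, W a /\ f a = b.

Definition restrict_image (A B : Type) (f : A -> B) (W : A -> Prop)
  (s : {a : A | W a}) : {b : B | image f W b} :=
  exist _ (f (proj1_sig s)) (ex_intro _ (proj1_sig s) (conj (proj2_sig s) eq_refl)).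

Arguments sub_top {T} O P _.
Arguments restrict_image {A B} f W s.
Arguments image {A B} f W _.

Definition local_homeo (A B : Type) (OA : topology A) (OB : topology B)
  (f : A -> B) : Prop :=
  forall a, exists W, OA W /\ W a /\ OB (image f W) /\
    homeomorphism (sub_top OA W) (sub_top OB (image f W)) (restrict_image f W).

Section PrePseudogroup.
Variables (X : Type) (T : TopSpace X).

(* the objects of X_top: open subsets of X *)
Record Opn := mkOpn { os : X -> Prop; os_open : xopen T os }.

Definition subo (U V : Opn) : Prop := forall x, os U x -> os V x.

Definition Xo : Opn := {| os := fun _ => True; os_open := top_full (xtop T) |}.

(* A small category with object set X_top, containing X_top as a subcategory
   (identity on objects) via the inclusion morphisms [incl]. *)
Record PreCat := {
  hom : Opn -> Opn -> Type;
  cmp : forall U V W : Opn, hom V W -> hom U V -> hom U W;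
  idm : forall U : Opn, hom U U;
  cmp_assoc : forall (U V W Z : Opn) (h : hom W Z) (g : hom V W) (f : hom U V),
      cmp h (cmp g f) = cmp (cmp h g) f;
  cmp_id_l : forall (U V : Opn) (f : hom U V), cmp (idm V) f = f;
  cmp_id_r : forall (U V : Opn) (f : hom U V), cmp f (idm U) = f;
  incl : forall U V : Opn, subo U V -> hom U V;
  incl_id : forall (U : Opn) (H : subo U U), incl H = idm U;
  incl_cmp : forall (U V W : Opn) (H1 : subo U V) (H2 : subo V W) (H3 : subo U W),
      cmp (incl H2) (incl H1) = incl H3
}.

Variable C : PreCat.

(* representatives of germs at x of morphisms into V: f : U -> V with x in U *)
Record GRep (x : X) (V : Opn) := mkG { gU : Opn; gx : os gU x; gf : hom C gU V }.

Definition germ_eq (x : X) (V : Opn) (r r' : GRep x V) : Prop :=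
  exists (W : Opn) (hW : os W x) (H1 : subo W (gU r)) (H2 : subo W (gU r')),
    cmp (gf r) (incl C H1) = cmp (gf r') (incl C H2).

(* C_x(V) = colim_{U ∋ x} C(U,V), as the set of germ classes *)
Definition Germ (x : X) (V : Opn) : Type :=
  { P : GRep x V -> Prop | exists r, forall r', P r' <-> germ_eq r r' }.

Definition germ_of (x : X) (V : Opn) (r : GRep x V) : Germ x V :=
  exist _ (germ_eq r) (ex_intro _ r (fun r' => iff_refl _)).

Definition post (x : X) (V V' : Opn) (H : subo V V') (r : GRep x V) : GRep x V' :=
  @mkG x V' (gU r) (gx r) (cmp (incl C H) (gf r)).

Definition compatible (x y : X) (phi : forall V : Opn, os V y -> Germ x V) : Prop :=
  forall (V V' : Opn) (H : subo V V') (hV : os V y) (hV' : os V' y),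
    exists r : GRep x V, phi V hV = germ_of r /\ phi V' hV' = germ_of (post H r).

(* C_x^y = lim_{V ∋ y} C_x(V) *)
Definition Cxy (x y : X) : Type :=
  { phi : forall V : Opn, os V y -> Germ x V | compatible phi }.

Definition Mor : Type := { x : X & { y : X & Cxy x y } }.

Definition mk_mor (x y : X) (phi : Cxy x y) : Mor := existT _ x (existT _ y phi).
Definition src (e : Mor) : X := projT1 e.
Definition tgt (e : Mor) : X := projT1 (projT2 e).
Definition fam (e : Mor) : forall V : Opn, os V (tgt e) -> Germ (src e) V :=
  proj1_sig (projT2 (projT2 e)).

Arguments fam : clear implicits.

(* composition in C^star: (ψ ∘ φ)_W = germ at x of g ∘ f where g represents ψ_W
   and f represents φ_V (V the domain of g) *)
Definition comp_rel (x y z : X) (phi : Cxy x y) (psi : Cxy y z) (chi : Cxy x z) : Prop :=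
  forall (W : Opn) (hW : os W z),
    exists (V : Opn) (hV : os V y) (g : hom C V W) (U : Opn) (hU : os U x) (f : hom C U V),
      proj1_sig psi W hW = germ_of (@mkG y W V hV g) /\
      proj1_sig phi V hV = germ_of (@mkG x V U hU f) /\
      proj1_sig chi W hW = germ_of (@mkG x W U hU (cmp g f)).

(* e3 = e1 ∘ e2 *)
Definition comp_mor_rel (e1 e2 e3 : Mor) : Prop :=
  exists (x y z : X) (phi : Cxy x y) (psi : Cxy y z) (chi : Cxy x z),
    e2 = mk_mor phi /\ e1 = mk_mor psi /\ e3 = mk_mor chi /\ comp_rel phi psi chi.

Definition is_idfam (x : X) (phi : Cxy x x) : Prop :=
  forall (V : Opn) (h : os V x), proj1_sig phi V h = germ_of (@mkG x V V h (idm C V)).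

Definition is_unit (x : X) (e : Mor) : Prop :=
  exists phi : Cxy x x, e = mk_mor phi /\ is_idfam phi.

Definition inv_rel (e e' : Mor) : Prop :=
  exists i1 i2 : Mor, is_unit (src e) i1 /\ is_unit (tgt e) i2 /\
    comp_mor_rel e' e i1 /\ comp_mor_rel e e' i2.

(* condition (2): ∐_{y ∈ V} C_x^y -> C_x(V), (y,φ) ↦ φ_V, is a bijection *)
Definition pp_cond2 : Prop :=
  forall (x : X) (V : Opn),
    (forall g : Germ x V, exists (y : X) (h : os V y) (phi : Cxy x y),
        proj1_sig phi V h = g) /\
    (forall (y y' : X) (h : os V y) (h' : os V y') (phi : Cxy x y) (phi' : Cxy x y'),
        proj1_sig phi V h = proj1_sig phi' V h' ->
        existT (fun y => Cxy x y) y phi = existT (fun y => Cxy x y) y' phi').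

Definition pp_groupoid : Prop := forall e : Mor, exists e' : Mor, inv_rel e e'.

(* condition (1) holds by construction (objects of C are the opens of X) *)
Definition pre_pseudogroup : Prop := pp_cond2 /\ pp_groupoid.

(* basic open [f,U] = { f_x : x ∈ U }, transported to Mor via e ↦ e_X ∈ C_x(X) *)
Definition basic_set (U : Opn) (f : hom C U Xo) : Mor -> Prop :=
  fun e => exists hx : os U (src e),
    fam e Xo I = germ_of (@mkG (src e) Xo U hx f).

Definition mor_top : topology Mor :=
  gen_top (fun A => exists (U : Opn) (f : hom C U Xo), forall e, A e <-> basic_set f e).

Definition FP : Type := { p : Mor * Mor | src (fst p) = tgt (snd p) }.

Definition fp_top : topology FP :=
  sub_top (prod_top mor_top mor_top) (fun p : Mor * Mor => src (fst p) = tgt (snd p)).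

End PrePseudogroup.

Arguments mor_top {X T} C _.
Arguments fp_top {X T} C _.

(* Main.v *)
Require Import Defs.
From Stdlib Require Import Classical ClassicalEpsilon FunctionalExtensionality PropExtensionality ProofIrrelevance Eqdep.

Set Implicit Arguments.
Unset Strict Implicit.

Section Gen.

Lemma open_local (A : Type) (OA : topology A) (HT : is_topology OA) (S : A -> Prop) :
  (forall a, S a -> exists N, OA N /\ N a /\ forall b, N b -> S b) -> OA S.
Proof.
  intro H.
  assert (E : S = (fun t => exists N, (OA N /\ forall b, N b -> S b) /\ N t)).
  { apply functional_extensionality; intro t; apply propositional_extensionality; split.
    - intro Ht. destruct (H t Ht) as [N [HN [Nt HNS]]]. exists N; auto.
    - intros [N [[_ HNS] Nt]]. auto. }
  rewrite E. apply (top_union HT). intros N [HN _]; exact HN.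
Qed.

Lemma gen_top_iff (A : Type) (B : topology A) (S : A -> Prop) : gen_top B S <-> gen_open B S.
Proof.
  split.
  - intros [S' [HS' E]].
    assert (S = S') as -> by (apply functional_extensionality; intro t; apply propositional_extensionality; apply E).
    exact HS'.
  - intro H. exists S; split; [exact H| tauto].
Qed.

Lemma gen_top_is (A : Type) (B : topology A) : is_topology (gen_top B).
Proof.
  constructor.
  - apply gen_top_iff. apply go_full.
  - intros S S' H H'. apply gen_top_iff. apply gen_top_iff in H. apply gen_top_iff in H'.
    apply go_inter; auto.
  - intros F HF. apply gen_top_iff.
    assert (E : (fun t => exists A0, F A0 /\ A0 t) = (fun t => exists A0, gen_open B A0 /\ F A0 /\ A0 t)).
    { apply functional_extensionality; intro t; apply propositional_extensionality; split.
      - intros [A0 [H1 H2]]. exists A0. split; [apply gen_top_iff; auto| auto].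
      - intros [A0 [_ [H1 H2]]]. eauto. }
    rewrite E.
    assert (E2 : (fun t => exists A0, gen_open B A0 /\ F A0 /\ A0 t) =
                 (fun t => exists A0, (fun A1 => gen_open B A1 /\ F A1) A0 /\ A0 t)).
    { apply functional_extensionality; intro t; apply propositional_extensionality; firstorder. }
    rewrite E2. apply go_union. intros A0 [H _]; exact H.
Qed.

Lemma sub_top_is (A : Type) (O : topology A) (P : A -> Prop) : is_topology O -> is_topology (sub_top O P).
Proof.
  intro HT. constructor.
  - exists (fun _ => True). split; [apply (top_full HT)| tauto].
  - intros S S' [U [HU EU]] [U' [HU' EU']]. exists (fun t => U t /\ U' t).
    split; [apply (top_inter HT); auto|]. intro s. rewrite EU, EU'. tauto.
  - intros F HF.
    exists (fun t => exists U0, (O U0 /\ exists A0, F A0 /\ forall s, A0 s <-> U0 (proj1_sig s)) /\ U0 t).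
    split.
    + apply (top_union HT). intros U0 [H _]; exact H.
    + intro s. split.
      * intros [A0 [HA0 A0s]]. destruct (HF A0 HA0) as [U0 [HU0 E]].
        exists U0. split; [split; [auto| exists A0; auto] | apply E; auto].
      * intros [U0 [[_ [A0 [HA0 E]]] U0s]]. exists A0. split; auto. apply E; auto.
Qed.

Lemma cont_gen (A B : Type) (OA : topology A) (HT : is_topology OA) (BB : topology B) (f : A -> B) :
  (forall S, BB S -> forall a, S (f a) -> exists N, OA N /\ N a /\ forall b, N b -> S (f b)) ->
  continuous OA (gen_top BB) f.
Proof.
  intros H V HV. apply gen_top_iff in HV. apply open_local; auto.
  induction HV as [S HS| | S S' _ IH _ IH' | F HF IH].
  - intros a Ha. apply H; auto.
  - intros a _. exists (fun _ => True). split; [apply (top_full HT)|]. auto.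
  - intros a [Ha Ha']. destruct (IH a Ha) as [N [HN [Na HNS]]].
    destruct (IH' a Ha') as [N' [HN' [Na' HNS']]].
    exists (fun t => N t /\ N' t). split; [apply (top_inter HT); auto|]. split; auto.
    intros b [Nb Nb']. auto.
  - intros a [S [HS Sa]]. destruct (IH S HS a Sa) as [N [HN [Na HNS]]].
    exists N. split; auto. split; auto. intros b Nb. exists S. auto.
Qed.

Lemma lh_crit (A B : Type) (OA : topology A) (OB : topology B) (f : A -> B) :
  continuous OA OB f ->
  (forall a, exists (W : A -> Prop) (s : B -> A), OA W /\ W a /\ OB (image f W) /\
     (forall w, W w -> s (f w) = w) /\
     (forall O, OA O -> exists O', OB O' /\ forall b, image f W b -> (O (s b) <-> O' b))) ->
  local_homeo OA OB f.
Proof.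
  intros Hc H a. destruct (H a) as [W [s [HW [Wa [HI [Hs Hrel]]]]]].
  exists W. split; auto. split; auto. split; auto.
  assert (Ws : forall b, image f W b -> W (s b)).
  { intros b [w [Ww <-]]. rewrite Hs; auto. }
  assert (fs : forall b, image f W b -> f (s b) = b).
  { intros b [w [Ww <-]]. rewrite Hs; auto. }
  split.
  - intros V [U [HU EU]]. exists (fun t => U (f t)). split; [apply Hc; auto|].
    intro t. rewrite EU. simpl. tauto.
  - exists (fun b : {b | image f W b} => exist W (s (proj1_sig b)) (Ws _ (proj2_sig b))).
    split; [|split].
    + intros [w Ww]. apply eq_sig_hprop; [intros; apply proof_irrelevance|]. simpl. auto.
    + intros [b Hb]. apply eq_sig_hprop; [intros; apply proof_irrelevance|]. simpl. auto.
    + intros V [U [HU EU]]. destruct (Hrel U HU) as [U' [HU' E']].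
      exists U'. split; auto. intros [b Hb]. rewrite EU. simpl. apply E'; auto.
Qed.

End Gen.

Section Germs.
Variables (X : Type) (T : TopSpace X) (C : PreCat T).

Notation G := (@germ_of X T C _ _).

Definition meet (U V : Opn T) : Opn T :=
  mkOpn (os := fun t => os U t /\ os V t) (top_inter (xtop T) (os_open U) (os_open V)).

Lemma restr2 (U V W W' : Opn T) (f : hom C U V) (H : subo W U) (H' : subo W' W) (H'' : subo W' U) :
  cmp (cmp f (incl C H)) (incl C H') = cmp f (incl C H'').
Proof. rewrite <- cmp_assoc. rewrite (incl_cmp C H' H H''). reflexivity. Qed.

Lemma germ_eq_refl x V (r : GRep C x V) : germ_eq r r.
Proof.
  exists (gU r), (gx r). exists (fun t h => h), (fun t h => h). reflexivity.
Qed.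

Lemma germ_eq_sym x V (r r' : GRep C x V) : germ_eq r r' -> germ_eq r' r.
Proof. intros [W [hW [H1 [H2 E]]]]. exists W, hW, H2, H1. auto. Qed.

Lemma germ_eq_trans x V (r1 r2 r3 : GRep C x V) : germ_eq r1 r2 -> germ_eq r2 r3 -> germ_eq r1 r3.
Proof.
  intros [W [hW [H1 [H2 E]]]] [W' [hW' [H2' [H3 E']]]].
  set (M := meet W W').
  assert (K : subo M W) by (intros t [a b]; exact a).
  assert (K' : subo M W') by (intros t [a b]; exact b).
  assert (K1 : subo M (gU r1)) by (intros t [a b]; auto).
  assert (K2 : subo M (gU r2)) by (intros t [a b]; auto).
  assert (K3 : subo M (gU r3)) by (intros t [a b]; auto).
  exists M, (conj hW hW'), K1, K3.
  rewrite <- (restr2 (gf r1) H1 K K1). rewrite E. rewrite (restr2 (gf r2) H2 K K2).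
  rewrite <- (restr2 (gf r2) H2' K' K2). rewrite E'. apply restr2.
Qed.

Lemma germ_of_eq x V (r r' : GRep C x V) : G r = G r' <-> germ_eq r r'.
Proof.
  split.
  - intro E. assert (P : proj1_sig (G r') r') by (apply germ_eq_refl).
    rewrite <- E in P. exact P.
  - intro H. apply eq_sig_hprop; [intros; apply proof_irrelevance|]. simpl.
    apply functional_extensionality; intro t; apply propositional_extensionality; split.
    + intro H'. eapply germ_eq_trans; [apply germ_eq_sym; exact H| exact H'].
    + intro H'. eapply germ_eq_trans; [exact H| exact H'].
Qed.

Lemma germ_rep x V (g : Germ C x V) : exists r, g = G r.
Proof.
  destruct g as [P [r Hr]]. exists r. apply eq_sig_hprop; [intros; apply proof_irrelevance|]. simpl.
  apply functional_extensionality; intro t; apply propositional_extensionality; apply Hr.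
Qed.

Lemma germ_postc x V V' (h : hom C V V') U U' (hx : os U x) (hx' : os U' x) (f : hom C U V) (f' : hom C U' V) :
  G (mkG hx f) = G (mkG hx' f') -> G (mkG hx (cmp h f)) = G (mkG hx' (cmp h f')).
Proof.
  intro E. apply germ_of_eq in E. apply germ_of_eq.
  destruct E as [W [hW [H1 [H2 E]]]]. exists W, hW, H1, H2. simpl in *.
  rewrite <- !cmp_assoc. rewrite E. reflexivity.
Qed.

Lemma germ_restr x V U U' (hx : os U x) (hx' : os U' x) (f : hom C U V) (H : subo U' U) :
  G (mkG hx f) = G (mkG hx' (cmp f (incl C H))).
Proof.
  apply germ_of_eq. exists U', hx', H, (fun t h => h). simpl.
  rewrite incl_id. rewrite cmp_id_r. reflexivity.
Qed.

Lemma germ_pi x V U (hx hx' : os U x) (f : hom C U V) : G (mkG hx f) = G (mkG hx' f).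
Proof. rewrite (proof_irrelevance _ hx hx'). reflexivity. Qed.

Lemma germ_near x V U U' (hx : os U x) (hx' : os U' x) (f : hom C U V) (f' : hom C U' V) :
  G (mkG hx f) = G (mkG hx' f') ->
  exists W : Opn T, os W x /\ subo W U /\ subo W U' /\
    forall x0 (h : os U x0) (h' : os U' x0), os W x0 ->
      @germ_of X T C x0 V (mkG h f) = germ_of (mkG h' f').
Proof.
  intro E. apply germ_of_eq in E. destruct E as [W [hW [H1 [H2 E]]]].
  exists W. split; auto. split; auto. split; auto.
  intros x0 h h' hw. apply germ_of_eq. exists W, hw, H1, H2. exact E.
Qed.

Lemma comp_post x y (phi : Cxy C x y) V V' (H : subo V V') (hV : os V y) (hV' : os V' y) (r : GRep C x V) :
  proj1_sig phi V hV = G r -> proj1_sig phi V' hV' = G (post H r).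
Proof.
  intro E. destruct (proj2_sig phi V V' H hV hV') as [r0 [E1 E2]].
  rewrite E2. rewrite E in E1. apply germ_of_eq in E1.
  destruct r as [U hx f], r0 as [U0 hx0 f0].
  apply germ_of_eq. apply germ_of_eq. apply germ_postc. symmetry. apply germ_of_eq. exact E1.
Qed.

Lemma comp_pi x y (phi : Cxy C x y) V (h h' : os V y) : proj1_sig phi V h = proj1_sig phi V h'.
Proof. rewrite (proof_irrelevance _ h h'). reflexivity. Qed.



Variable (HC2 : pp_cond2 C).

Notation XX := (Xo T).

Lemma existT_comp x y y' (phi : Cxy C x y) (phi' : Cxy C x y') :
  existT (fun y => Cxy C x y) y phi = existT _ y' phi' ->
  y = y' /\ forall V h h', proj1_sig phi V h = proj1_sig phi' V h'.
Proof.
  intro E. pose proof (f_equal (@projT1 _ _) E) as Ey. simpl in Ey. subst y'.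
  apply inj_pair2 in E. subst phi'. split; [reflexivity|]. intros. apply comp_pi.
Qed.

Lemma mor_ext x y y' (phi : Cxy C x y) (phi' : Cxy C x y') :
  proj1_sig phi XX I = proj1_sig phi' XX I -> mk_mor phi = mk_mor phi'.
Proof.
  intro E. unfold mk_mor. f_equal. exact (proj2 (HC2 x XX) y y' I I phi phi' E).
Qed.

Lemma mor_inj_V x y y' (phi : Cxy C x y) (phi' : Cxy C x y') V h h' :
  proj1_sig phi V h = proj1_sig phi' V h' -> y = y' /\ forall W k k', proj1_sig phi W k = proj1_sig phi' W k'.
Proof. intro E. apply existT_comp. exact (proj2 (HC2 x V) y y' h h' phi phi' E). Qed.

Lemma mor_surj x V (g : Germ C x V) : exists y (h : os V y) (phi : Cxy C x y), proj1_sig phi V h = g.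
Proof. exact (proj1 (HC2 x V) g). Qed.

Lemma tgt_lemma x y (phi : Cxy C x y) V (H : subo V XX) U (hx : os U x) (g : hom C U V) :
  proj1_sig phi XX I = G (mkG hx (cmp (incl C H) g)) ->
  exists hy : os V y, proj1_sig phi V hy = G (mkG hx g).
Proof.
  intro E. destruct (mor_surj (G (mkG hx g))) as [y' [hy' [ch Ech]]].
  assert (E2 : proj1_sig ch XX I = proj1_sig phi XX I).
  { rewrite E. rewrite (comp_post H I Ech). reflexivity. }
  destruct (mor_inj_V E2) as [Ey Eall]. subst y'. exists hy'. rewrite <- Ech. symmetry. apply Eall.
Qed.

Lemma compwd x y z (phi : Cxy C x y) (psi : Cxy C y z) W (hW : os W z)
  V1 (hV1 : os V1 y) (g1 : hom C V1 W) U1 (hU1 : os U1 x) (f1 : hom C U1 V1)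
  V2 (hV2 : os V2 y) (g2 : hom C V2 W) U2 (hU2 : os U2 x) (f2 : hom C U2 V2) :
  proj1_sig psi W hW = G (mkG hV1 g1) -> proj1_sig phi V1 hV1 = G (mkG hU1 f1) ->
  proj1_sig psi W hW = G (mkG hV2 g2) -> proj1_sig phi V2 hV2 = G (mkG hU2 f2) ->
  G (mkG hU1 (cmp g1 f1)) = G (mkG hU2 (cmp g2 f2)).
Proof.
  intros E1 F1 E2 F2. rewrite E1 in E2. apply germ_of_eq in E2.
  destruct E2 as [N [hN [K1 [K2 EN]]]]. simpl in *.
  destruct (germ_rep (proj1_sig phi N hN)) as [[U hU f] Ef].
  pose proof (comp_post K1 hV1 Ef) as P1. rewrite F1 in P1. unfold post in P1. simpl in P1.
  pose proof (comp_post K2 hV2 Ef) as P2. rewrite F2 in P2. unfold post in P2. simpl in P2.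
  rewrite (germ_postc g1 P1). rewrite (germ_postc g2 P2).
  rewrite !cmp_assoc. rewrite EN. reflexivity.
Qed.

Lemma comp_component x y z (phi : Cxy C x y) (psi : Cxy C y z) (chi : Cxy C x z) :
  comp_rel phi psi chi ->
  forall W (hW : os W z) V (hV : os V y) (g : hom C V W) U (hU : os U x) (f : hom C U V),
  proj1_sig psi W hW = G (mkG hV g) -> proj1_sig phi V hV = G (mkG hU f) ->
  proj1_sig chi W hW = G (mkG hU (cmp g f)).
Proof.
  intros Hc W hW V hV g U hU f E F.
  destruct (Hc W hW) as [V' [hV' [g' [U' [hU' [f' [E' [F' Ch]]]]]]]].
  rewrite Ch. exact (compwd E' F' E F).
Qed.


Definition idfam x : forall V : Opn T, os V x -> Germ C x V := fun V h => G (mkG h (idm C V)).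
Arguments idfam : clear implicits.

Lemma idfam_compat x : compatible (idfam x).
Proof.
  intros V V' H hV hV'. exists (mkG hV (idm C V)). split; [reflexivity|].
  unfold idfam, post. apply germ_of_eq. exists V, hV, H, (fun t h => h). simpl.
  rewrite incl_id, !cmp_id_r, cmp_id_l. reflexivity.
Qed.

Definition unitC x : Cxy C x x := exist _ (idfam x) (@idfam_compat x).
Arguments unitC : clear implicits.

Lemma unit_is x : is_unit x (mk_mor (unitC x)).
Proof. exists (unitC x). split; [reflexivity|]. intros V h. reflexivity. Qed.

Lemma key x' y' (q : Cxy C x' y') (p : Cxy C y' x') (c : Cxy C y' y') (V2 W0 : Opn T)
  (hy : os V2 y') (hx : os W0 x') (b : hom C W0 V2) (a : hom C V2 XX) (K : subo W0 XX) :
  comp_rel p q c -> is_idfam c -> proj1_sig q V2 hy = G (mkG hx b) -> cmp a b = incl C K ->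
  proj1_sig p XX I = G (mkG hy a).
Proof.
  intros Hc Hid Eq Hab.
  destruct (germ_rep (proj1_sig p W0 hx)) as [[P hP r] Er].
  pose proof (comp_component Hc Eq Er) as Cc. rewrite Hid in Cc. simpl in Cc.
  pose proof (germ_postc a Cc) as Cd. rewrite cmp_id_r, cmp_assoc, Hab in Cd.
  rewrite (comp_post K I Er). unfold post. simpl. rewrite Cd. reflexivity.
Qed.

Ltac morinj E := unfold mk_mor in E;
  let E1 := fresh "E" in pose proof (f_equal (@projT1 _ _) E) as E1; cbn in E1; subst;
  apply inj_pair2 in E;
  let E2 := fresh "E" in pose proof (f_equal (@projT1 _ _) E) as E2; cbn in E2; subst;
  apply inj_pair2 in E; subst.

Lemma inv_spec x y (phi : Cxy C x y) e' : inv_rel (mk_mor phi) e' ->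
  exists (p : Cxy C y x) (c1 : Cxy C x x) (c2 : Cxy C y y),
    e' = mk_mor p /\ comp_rel phi p c1 /\ is_idfam c1 /\ comp_rel p phi c2 /\ is_idfam c2.
Proof.
  intros [i1 [i2 [[u1 [Ei1 Hu1]] [[u2 [Ei2 Hu2]] [C1 C2]]]]].
  change (src (mk_mor phi)) with x in *. change (tgt (mk_mor phi)) with y in *.
  destruct C1 as [x1 [y1 [z1 [ph [ps [ch [Ea [Eb [Ec Hc]]]]]]]]].
  destruct C2 as [x2 [y2 [z2 [ph2 [ps2 [ch2 [Ea2 [Eb2 [Ec2 Hc2]]]]]]]]].
  subst.
  morinj Ea. morinj Eb2. morinj Ea2. morinj Ec. morinj Ec2.
  exists ph2, ch, ch2. repeat split; auto.
Qed.



Variable HT1 : T1 T.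

Definition opn_of (W : X -> Prop) (HW : xopen T W) : Opn T := mkOpn (os := W) HW.

Lemma comp_exists x y z (phi : Cxy C x y) (psi : Cxy C y z) : exists chi : Cxy C x z, comp_rel phi psi chi.
Proof.
  destruct (germ_rep (proj1_sig psi XX I)) as [[V hV g] Eg].
  destruct (germ_rep (proj1_sig phi V hV)) as [[U hU f] Ef].
  destruct (mor_surj (G (mkG hU (cmp g f)))) as [z' [hz' [chi Echi]]].
  assert (Aux : forall W (hW : os W z), exists V1 (hV1 : os V1 y) (g1 : hom C V1 W) U1 (hU1 : os U1 x) (f1 : hom C U1 V1),
     proj1_sig psi W hW = G (mkG hV1 g1) /\ proj1_sig phi V1 hV1 = G (mkG hU1 f1) /\
     exists hw : os W z', proj1_sig chi W hw = G (mkG hU1 (cmp g1 f1))).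
  { intros W hW.
    destruct (germ_rep (proj1_sig psi W hW)) as [[V1 hV1 g1] Eg1].
    destruct (germ_rep (proj1_sig phi V1 hV1)) as [[U1 hU1 f1] Ef1].
    exists V1, hV1, g1, U1, hU1, f1. split; [exact Eg1|]. split; [exact Ef1|].
    destruct (mor_surj (G (mkG hU1 (cmp g1 f1)))) as [z'' [hz'' [ch Ech]]].
    assert (HWX : subo W XX) by (intros t _; exact I).
    pose proof (comp_post HWX I Ech) as P1. unfold post in P1. simpl in P1.
    pose proof (comp_post HWX I Eg1) as P2. unfold post in P2. simpl in P2.
    pose proof (compwd P2 Ef1 Eg Ef) as P3. rewrite <- cmp_assoc in P3.
    rewrite P3, <- Echi in P1.
    destruct (mor_inj_V P1) as [Ez Eall]. subst z''.
    exists hz''. rewrite <- Ech. symmetry. apply Eall. }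
  destruct (classic (z = z')) as [Ezz | Nzz].
  - subst z'. exists chi. intros W hW.
    destruct (Aux W hW) as [V1 [hV1 [g1 [U1 [hU1 [f1 [A1 [A2 [hw A3]]]]]]]]].
    exists V1, hV1, g1, U1, hU1, f1. split; auto. split; auto. rewrite (proof_irrelevance _ hW hw). exact A3.
  - exfalso. destruct (HT1 Nzz) as [W [HW [Wz NWz']]].
    destruct (Aux (opn_of HW) Wz) as [V1 [hV1 [g1 [U1 [hU1 [f1 [A1 [A2 [hw A3]]]]]]]]].
    exact (NWz' hw).
Qed.

Ltac ufold := unfold fam, src, tgt in *; cbn in *.

Lemma mor_top_is : is_topology (mor_top C).
Proof. apply gen_top_is. Qed.

Lemma basic_open U (f : hom C U XX) : mor_top C (basic_set f).
Proof. apply gen_top_iff. apply go_basic. exists U, f. tauto. Qed.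

Lemma meet_l (U V : Opn T) : subo (meet U V) U.
Proof. intros t [a b]; exact a. Qed.

Lemma src_cont : continuous (mor_top C) (xopen T) (@src X T C).
Proof.
  intros O HO. apply open_local; [apply mor_top_is|]. intros e He.
  destruct e as [x [y phi]]. ufold.
  destruct (germ_rep (proj1_sig phi XX I)) as [[U hU f] Ef].
  set (M := meet U (opn_of HO)).
  exists (basic_set (cmp f (incl C (@meet_l U (opn_of HO))))). split; [apply basic_open|]. split.
  - exists (conj hU He). ufold. rewrite Ef. apply germ_restr.
  - intros e' [hx _]. exact (proj2 hx).
Qed.

Lemma tgt_cont : continuous (mor_top C) (xopen T) (@tgt X T C).
Proof.
  intros O HO. apply open_local; [apply mor_top_is|]. intros e He.
  destruct e as [x [y phi]]. ufold.
  set (V := opn_of HO).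
  destruct (germ_rep (proj1_sig phi V He)) as [[U hU g] Eg].
  assert (HVX : subo V XX) by (intros t _; exact I).
  exists (basic_set (cmp (incl C HVX) g)). split; [apply basic_open|]. split.
  - exists hU. ufold. exact (comp_post HVX I Eg).
  - intros [x' [y' phi']] [hx E']. ufold.
    destruct (tgt_lemma E') as [hy _]. exact hy.
Qed.

Lemma sigma_ex U (f : hom C U XX) : exists s : X -> Mor C, forall x, os U x -> basic_set f (s x) /\ src (s x) = x.
Proof.
  assert (H : forall x, exists e, os U x -> basic_set f e /\ src e = x).
  { intro x. destruct (classic (os U x)) as [h|n].
    - destruct (mor_surj (G (mkG h f))) as [y [hy [phi E]]].
      exists (mk_mor phi). intros _. split; [|reflexivity].
      exists h. ufold. rewrite (proof_irrelevance _ I hy). exact E.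
    - exists (mk_mor (unitC x)). intro; contradiction. }
  exists (fun x => proj1_sig (constructive_indefinite_description _ (H x))).
  intro x. exact (proj2_sig (constructive_indefinite_description _ (H x))).
Qed.

Lemma basic_inj U (f : hom C U XX) e1 e2 : basic_set f e1 -> basic_set f e2 -> src e1 = src e2 -> e1 = e2.
Proof.
  destruct e1 as [x1 [y1 p1]], e2 as [x2 [y2 p2]]. intros [h1 E1] [h2 E2] Ex. ufold.
  subst x2. apply mor_ext. rewrite E1, E2. apply germ_pi.
Qed.

Definition Og U U' (f : hom C U XX) (g : hom C U' XX) : X -> Prop :=
  fun x => exists (h1 : os U x) (h2 : os U' x), @germ_of X T C x XX (mkG h1 f) = G (mkG h2 g).

Lemma basic_iff U U' (f : hom C U XX) (g : hom C U' XX) e :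
  basic_set f e -> (basic_set g e <-> Og f g (src e)).
Proof.
  destruct e as [x [y p]]. intros [h1 E1]. ufold. split.
  - intros [h2 E2]. exists h1, h2. ufold. rewrite <- E1, <- E2. reflexivity.
  - intros [h1' [h2 E]]. exists h2. ufold. rewrite E1, <- E. apply germ_pi.
Qed.

Lemma Og_open U U' (f : hom C U XX) (g : hom C U' XX) : xopen T (Og f g).
Proof.
  apply open_local; [apply xtop|]. intros x [h1 [h2 E]].
  destruct (germ_near E) as [W [hW [K1 [K2 HN]]]].
  exists (os W). split; [apply os_open|]. split; [exact hW|].
  intros b Wb. exists (K1 b Wb), (K2 b Wb). apply HN; auto.
Qed.

Lemma sigma_relcont U (f : hom C U XX) (s : X -> Mor C) :
  (forall x, os U x -> basic_set f (s x) /\ src (s x) = x) ->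
  forall O, mor_top C O -> exists O', xopen T O' /\ forall x, os U x -> (O (s x) <-> O' x).
Proof.
  intros Hs O HO. apply gen_top_iff in HO.
  induction HO as [S HS | | S S' _ IH _ IH' | F HF IH].
  - destruct HS as [U' [g HSg]]. exists (Og f g). split; [apply Og_open|].
    intros x hx. rewrite HSg. destruct (Hs x hx) as [B Es].
    rewrite (basic_iff g B). rewrite Es. tauto.
  - exists (fun _ => True). split; [apply (top_full (xtop T))|]. tauto.
  - destruct IH as [O1 [HO1 E1]], IH' as [O2 [HO2 E2]].
    exists (fun t => O1 t /\ O2 t). split; [apply (top_inter (xtop T)); auto|].
    intros x hx. rewrite (E1 x hx), (E2 x hx). tauto.
  - exists (fun x => exists B, (xopen T B /\ exists A, F A /\ forall x, os U x -> (A (s x) <-> B x)) /\ B x).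
    split; [apply (top_union (xtop T)); intros B [HB _]; exact HB|].
    intros x hx. split.
    + intros [A [FA As]]. destruct (IH A FA) as [B [HB EB]].
      exists B. split; [split; [auto| exists A; auto]| apply EB; auto].
    + intros [B [[_ [A [FA EA]]] Bx]]. exists A. split; auto. apply EA; auto.
Qed.

Lemma src_lh : local_homeo (mor_top C) (xopen T) (@src X T C).
Proof.
  apply lh_crit; [apply src_cont|]. intro e.
  destruct e as [x [y phi]].
  destruct (germ_rep (proj1_sig phi XX I)) as [[U hU f] Ef].
  destruct (sigma_ex f) as [s Hs].
  assert (Eim : image (@src X T C) (basic_set f) = os U).
  { apply functional_extensionality; intro b; apply propositional_extensionality; split.
    - intros [a [[hx _] <-]]. exact hx.
    - intro hb. exists (s b). split; apply (Hs b hb). }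
  exists (basic_set f), s. split; [apply basic_open|]. split; [exists hU; exact Ef|].
  split; [rewrite Eim; apply os_open|]. split.
  - intros w Hw. destruct Hw as [hw Ew].
    apply basic_inj with (f := f); [apply (Hs _ hw)| exists hw; exact Ew| apply (Hs _ hw)].
  - intros O HO. destruct (sigma_relcont Hs HO) as [O' [HO' E]].
    exists O'. split; auto. intros b Hb. rewrite Eim in Hb. apply E; auto.
Qed.

Section Inv.
Variable i : Mor C -> Mor C.
Variable Hi : forall e, inv_rel e (i e).

Lemma inv_cont : continuous (mor_top C) (mor_top C) i.
Proof.
  apply cont_gen; [apply mor_top_is|]. intros S [Ug [g HS]] e He. rewrite HS in He.
  destruct e as [x [y phi]].
  change (existT _ x (existT _ y phi)) with (mk_mor phi) in *.
  destruct (inv_spec (Hi (mk_mor phi))) as [p [c1 [c2 [Ep [Hc1 [Hid1 [Hc2 Hid2]]]]]]].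
  rewrite Ep in He. destruct He as [hy Eg]. ufold.
  destruct (Hc1 XX I) as [V2 [hV2 [a [U2 [hU2 [b [Ea [Eb Ec]]]]]]]].
  rewrite Hid1 in Ec. symmetry in Ec. apply germ_of_eq in Ec.
  destruct Ec as [W0 [hW0 [K1 [K2 EW]]]]. cbn in *. rewrite cmp_id_l in EW.
  rewrite Ea in Eg. apply germ_of_eq in Eg. destruct Eg as [W1 [hW1 [L1 [L2 EL]]]]. cbn in *.
  assert (HV2X : subo V2 XX) by (intros t _; exact I).
  set (b' := cmp b (incl C K1)).
  exists (fun e => basic_set (cmp (incl C HV2X) b') e /\ os W1 (tgt e)). split.
  { apply (top_inter mor_top_is); [apply basic_open| apply tgt_cont; apply os_open]. }
  split.
  - split; [|exact hW1]. exists hW0. ufold. rewrite (comp_post HV2X I Eb). unfold post. cbn.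
    rewrite (germ_restr hU2 hW0 _ K1). unfold b'. rewrite cmp_assoc. reflexivity.
  - intros [x' [y' q]] [[hx' Eq] hW1']. ufold. rewrite HS.
    change (existT _ x' (existT _ y' q)) with (mk_mor q) in *.
    destruct (tgt_lemma Eq) as [hy' Eq2].
    destruct (inv_spec (Hi (mk_mor q))) as [p' [c1' [c2' [Ep' [Hc1' [Hid1' [Hc2' Hid2']]]]]]].
    rewrite Ep'. exists (L2 y' hW1'). ufold.
    assert (Hab : cmp a b' = incl C K2) by (unfold b'; rewrite cmp_assoc; exact EW).
    rewrite (key Hc2' Hid2' Eq2 Hab).
    apply germ_of_eq. exists W1, hW1', L1, L2. exact EL.
Qed.

Lemma inv_inv e : i (i e) = e.
Proof.
  destruct e as [x [y phi]].
  change (existT _ x (existT _ y phi)) with (mk_mor phi) in *.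
  destruct (inv_spec (Hi (mk_mor phi))) as [p [c1 [c2 [Ep [Hc1 [Hid1 [Hc2 Hid2]]]]]]].
  rewrite Ep.
  destruct (inv_spec (Hi (mk_mor p))) as [q [c1' [c2' [Eq [Hc1' [Hid1' [Hc2' Hid2']]]]]]].
  rewrite Eq. apply mor_ext.
  destruct (Hc2 XX I) as [V2 [hV2 [a [U2 [hU2 [b [Ea [Eb Ec]]]]]]]].
  rewrite Hid2 in Ec. symmetry in Ec. apply germ_of_eq in Ec.
  destruct Ec as [W0 [hW0 [K1 [K2 EW]]]]. cbn in *. rewrite cmp_id_l in EW.
  assert (Hab : cmp a (cmp b (incl C K1)) = incl C K2) by (rewrite cmp_assoc; exact EW).
  rewrite (germ_restr hU2 hW0 _ K1) in Eb.
  rewrite (key Hc2' Hid2' Eb Hab). symmetry. exact Ea.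
Qed.

Lemma src_inv e : src (i e) = tgt e.
Proof.
  destruct e as [x [y phi]].
  change (existT _ x (existT _ y phi)) with (mk_mor phi) in *.
  destruct (inv_spec (Hi (mk_mor phi))) as [p [_ [_ [Ep _]]]]. rewrite Ep. reflexivity.
Qed.

Lemma tgt_inv e : tgt (i e) = src e.
Proof.
  destruct e as [x [y phi]].
  change (existT _ x (existT _ y phi)) with (mk_mor phi) in *.
  destruct (inv_spec (Hi (mk_mor phi))) as [p [_ [_ [Ep _]]]]. rewrite Ep. reflexivity.
Qed.

Lemma tgt_lh : local_homeo (mor_top C) (xopen T) (@tgt X T C).
Proof.
  apply lh_crit; [apply tgt_cont|]. intro e.
  destruct (germ_rep (@fam X T C (i e) XX I)) as [[V hV a] Ea].
  destruct (sigma_ex a) as [s Hs].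
  assert (Eim : image (@tgt X T C) (fun e' => basic_set a (i e')) = os V).
  { apply functional_extensionality; intro b; apply propositional_extensionality; split.
    - intros [a' [[hx _] <-]]. rewrite src_inv in hx. exact hx.
    - intro hb. exists (i (s b)). split.
      + rewrite inv_inv. apply (Hs b hb).
      + rewrite tgt_inv. apply (Hs b hb). }
  exists (fun e' => basic_set a (i e')), (fun y => i (s y)). split.
  { apply (inv_cont (basic_open a)). }
  split; [exists hV; exact Ea|].
  split; [rewrite Eim; apply os_open|]. split.
  - intros w Hw. assert (hw : os V (tgt w)) by (destruct Hw as [hx _]; rewrite src_inv in hx; exact hx).
    assert (Es : s (tgt w) = i w).
    { apply basic_inj with (f := a); [apply (Hs _ hw)| exact Hw|].
      rewrite (proj2 (Hs _ hw)). rewrite src_inv. reflexivity. }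
    rewrite Es. apply inv_inv.
  - intros O HO. destruct (sigma_relcont Hs (inv_cont HO)) as [O' [HO' E]].
    exists O'. split; auto. intros b Hb. rewrite Eim in Hb. apply E; auto.
Qed.

End Inv.

Lemma unit_cont (u : X -> Mor C) (Hu : forall x, is_unit x (u x)) : continuous (xopen T) (mor_top C) u.
Proof.
  apply cont_gen; [apply xtop|]. intros S [Ug [g HS]] x Hx. rewrite HS in Hx.
  destruct (Hu x) as [ph [Eu Hid]]. rewrite Eu in Hx. destruct Hx as [hg Eg]. ufold.
  rewrite Hid in Eg.
  destruct (germ_near Eg) as [W [hW [K1 [K2 HN]]]].
  exists (os W). split; [apply os_open|]. split; [exact hW|]. intros b Wb.
  rewrite HS. destruct (Hu b) as [ph' [Eu' Hid']]. rewrite Eu'. exists (K2 b Wb). ufold.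
  rewrite Hid'. apply HN; auto.
Qed.

Lemma comp_cont (m : FP C -> Mor C)
  (Hm : forall p, comp_mor_rel (fst (proj1_sig p)) (snd (proj1_sig p)) (m p)) :
  continuous (fp_top C) (mor_top C) m.
Proof.
  apply cont_gen; [apply sub_top_is; apply gen_top_is|]. intros S [Uk [k HS]] P0 HP0. rewrite HS in HP0.
  destruct (Hm P0) as [x [y [z [phi [psi [chi [E2 [E1 [E3 Hc]]]]]]]]].
  rewrite E3 in HP0. destruct HP0 as [hk Ek]. unfold fam in Ek; cbn in Ek.
  destruct (Hc XX I) as [V [hV [g [U [hU [f [Eg [Ef Ech]]]]]]]].
  rewrite Ech in Ek. apply germ_of_eq in Ek. destruct Ek as [W0 [hW0 [K1 [K2 EW]]]]. cbn in *.
  assert (HVX : subo V XX) by (intros t _; exact I).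
  set (f' := cmp f (incl C K1)).
  exists (fun s : FP C => basic_set g (fst (proj1_sig s)) /\ basic_set (cmp (incl C HVX) f') (snd (proj1_sig s))).
  split.
  { exists (fun pr => basic_set g (fst pr) /\ basic_set (cmp (incl C HVX) f') (snd pr)). split; [|tauto].
    apply gen_top_iff. apply go_basic.
    exists (basic_set g), (basic_set (cmp (incl C HVX) f')).
    split; [apply basic_open|]. split; [apply basic_open|]. tauto. }
  split.
  - cbv beta. rewrite E1, E2. split.
    + exists hV. exact Eg.
    + exists hW0. unfold fam; cbn. rewrite (comp_post HVX I Ef). unfold post. cbn.
      rewrite (germ_restr hU hW0 _ K1). unfold f'. rewrite cmp_assoc. reflexivity.
  - intros P' [B1 B2]. rewrite HS.
    destruct (Hm P') as [x' [y' [z' [phi' [psi' [chi' [E2' [E1' [E3' Hc']]]]]]]]].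
    rewrite E3'. rewrite E1' in B1. rewrite E2' in B2.
    destruct B1 as [hy'' Eg']. destruct B2 as [hx' Eq']. unfold fam in Eg', Eq'; cbn in Eg', Eq', hy'', hx'.
    destruct (tgt_lemma Eq') as [hy' Eq2].
    rewrite (proof_irrelevance _ hy' hy'') in Eq2.
    pose proof (comp_component Hc' Eg' Eq2) as Cc.
    exists (K2 x' hx'). unfold fam; cbn. rewrite Cc. unfold f'. rewrite cmp_assoc, EW.
    symmetry. apply germ_restr.
Qed.


End Germs.

Theorem mainTheorem4 (X : Type) (T : TopSpace X) (C : PreCat T) :
  T1 T -> pre_pseudogroup C ->
  local_homeo (mor_top C) (xopen T) (@src X T C) /\
  local_homeo (mor_top C) (xopen T) (@tgt X T C) /\
  ((exists u : X -> Mor C, forall x, is_unit x (u x)) /\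
   (forall u : X -> Mor C, (forall x, is_unit x (u x)) ->
      continuous (xopen T) (mor_top C) u)) /\
  ((exists i : Mor C -> Mor C, forall e, inv_rel e (i e)) /\
   (forall i : Mor C -> Mor C, (forall e, inv_rel e (i e)) ->
      continuous (mor_top C) (mor_top C) i)) /\
  ((exists m : FP C -> Mor C,
      forall p, comp_mor_rel (fst (proj1_sig p)) (snd (proj1_sig p)) (m p)) /\
   (forall m : FP C -> Mor C,
      (forall p, comp_mor_rel (fst (proj1_sig p)) (snd (proj1_sig p)) (m p)) ->
      continuous (fp_top C) (mor_top C) m)).
Proof.
  intros HT1 [HC2 HG].
  set (i := fun e => proj1_sig (constructive_indefinite_description _ (HG e))).
  assert (Hi : forall e, inv_rel e (i e)) by (intro e; exact (proj2_sig (constructive_indefinite_description _ (HG e)))).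
  assert (Hm0 : forall p : FP C, exists e3, comp_mor_rel (fst (proj1_sig p)) (snd (proj1_sig p)) e3).
  { intros [[e1 e2] Hs]. destruct e1 as [y0 [z psi]], e2 as [x [y phi]]. cbn in Hs |- *. subst y0.
    destruct (comp_exists HC2 HT1 phi psi) as [chi Hc].
    exists (mk_mor chi). exists x, y, z, phi, psi, chi. repeat split; auto. }
  split; [apply (src_lh HC2)|].
  split; [apply (tgt_lh HC2 Hi)|].
  split; [split|].
  { exists (fun x => mk_mor (unitC C x)). intro x. apply unit_is. }
  { intros u Hu. apply (unit_cont Hu). }
  split; [split|].
  { exists i; exact Hi. }
  { intros i' Hi'. apply (inv_cont HC2 Hi'). }
  split.
  { exists (fun p => proj1_sig (constructive_indefinite_description _ (Hm0 p))).
    intro p. exact (proj2_sig (constructive_indefinite_description _ (Hm0 p))). }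
  { intros m Hm. apply (comp_cont HC2 Hm). }
Qed.
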